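(* Let $c<1$ be any constant, $\ell\le n^c$, and suppose $d$ is unknown to the algorithm. Any non-adaptive randomized group testing algorithm that, with probability at least $3/4$, detects $\ell$ defective items must make at least $\Omega\left(\frac{\ell\log^2 n}{\log\ell+\log\log n}\right)$ tests.
   Context: Group testing: items $X=[n]$, unknown defective set $I\subseteq X$ with $d=|I|$. A test $Q\subseteq X$ has answer $1$ if $Q\cap I\neq\emptyset$ and $0$ otherwise. A non-adaptive (randomized) algorithm chooses all its tests before seeing any answer, then computes its output from the answers. ''Detects $\ell$ defective items'' means it outputs $L\subseteq I$ with $|L|=\ell$. ''$d$ is unknown'' means the algorithm receives no information about $|I|$ and must succeed (with the stated probability) for every defective set $I$ with $|I|\ge\ell$. Logarithms are base 2. *)

(* Defs.v *)
From HB Require Import structures.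
From mathcomp Require Import all_boot all_order all_algebra.
From mathcomp Require Import all_classical all_reals all_analysis.
From mathcomp Require Import Rstruct Rstruct_topology.
From Stdlib Require Import Rdefinitions.
Notation R := Rdefinitions.R.
Set Implicit Arguments. Unset Strict Implicit. Unset Printing Implicit Defensive.
Import Order.TTheory GRing.Theory Num.Theory.
Local Open Scope ring_scope.

Definition log2 (x : R) : R := ln x / ln 2.

Definition test_answer (n : nat) (I Q : {set 'I_n}) : bool := Q :&: I != finset.set0.

Definition answers (n m : nat) (tests : 'I_m -> {set 'I_n}) (I : {set 'I_n})
  : {ffun 'I_m -> bool} := [ffun j => test_answer I (tests j)].

Definition is_distr (Omega : finType) (p : Omega -> R) : Prop :=
  (forall w, 0 <= p w) /\ \sum_(w : Omega) p w = 1.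

(* A non-adaptive randomized algorithm making m tests on items [n]:
   random seed w ~ p; tests w : the m tests (chosen before any answer);
   dec w : the output computed from the answer vector.
   It detects l defectives with probability >= 3/4 with d unknown:
   for every defective set I with |I| >= l, with prob >= 3/4 the output L
   satisfies L \subset I and |L| = l. *)
Definition detects_whp (n m l : nat) (Omega : finType) (p : Omega -> R)
  (tests : Omega -> 'I_m -> {set 'I_n})
  (dec : Omega -> {ffun 'I_m -> bool} -> {set 'I_n}) : Prop :=
  is_distr p /\
  forall I : {set 'I_n}, leq l #|I| ->
    3 / 4 <= \sum_(w : Omega |
                   (dec w (answers (tests w) I) \subset I) &&
                   eqn #|dec w (answers (tests w) I)| l) p w.

(* Main.v *)
Require Import Defs.
From HB Require Import structures.
From mathcomp Require Import all_boot all_order all_algebra.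
From mathcomp Require Import all_classical all_reals all_analysis.
From mathcomp Require Import Rstruct Rstruct_topology.
From mathcomp Require Import zify ring lra.
Import Order.TTheory GRing.Theory Num.Theory.
Set Implicit Arguments. Unset Strict Implicit. Unset Printing Implicit Defensive.


Lemma binG n e k : k <= n -> 'C(n-k, e) * n^k <= 'C(n,e) * (n-e)^k.
Proof.
elim: k => [|k IH] hk; first by rewrite !subn0 !expn0 !muln1.
have IH' := IH (ltnW hk).
set b := n - k.+1.
have hb : n - k = b.+1 by rewrite /b; lia.
have key : 'C(b, e) * n <= 'C(b.+1, e) * (n - e).
  have h1 := mul_bin_down b.+1 e. rewrite /= in h1.
  have h2 : (b.+1 - e) * n <= (n - e) * b.+1.
    have hbn : b.+1 <= n by lia.
    case: (leqP e b.+1) => he; last by have -> : b.+1 - e = 0 by lia.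
    nia.
  set X := 'C(b, e) in h1 *; set Y := 'C(b.+1, e) in h1 *.
  set s := b.+1 - e in h1 h2 *; set r := n - e in h2 *.
  have h3 : Y * (s * n) <= Y * (r * b.+1) by apply: leq_mul.
  have h4 : b.+1 * X * n = s * Y * n by rewrite h1.
  rewrite -(leq_pmul2l (ltn0Sn b)). lia.
rewrite hb in IH'.
set X := 'C(b, e) in key *; set Y := 'C(b.+1, e) in key IH' *.
set Z := 'C(n, e) in IH' *.
rewrite !expnS.
set P := n ^ k in IH' *; set Q := (n - e) ^ k in IH' *.
set r := n - e in key *.
have h5 : X * n * P <= Y * r * P by apply: leq_mul.
have h6 : Y * P * r <= Z * Q * r by apply: leq_mul.
lia.
Qed.

Lemma bern n d q : d <= n -> (n-d)^q * (n + q*d) <= n^q.+1.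
Proof.
move=> hd; elim: q => [|q IH]; first by rewrite expn0 mul0n addn0 mul1n expn1.
set r := n - d.
have h1 : r * (n + q.+1 * d) <= n * (n + q * d) by rewrite /r; nia.
rewrite expnS (expnS n).
set P := r ^ q in IH *; set Q := n ^ q.+1 in IH *.
have h2 : P * (r * (n + q.+1 * d)) <= P * (n * (n + q * d)) by apply: leq_mul.
have h3 : n * (P * (n + q * d)) <= n * Q by apply: leq_mul.
lia.
Qed.

Lemma union_bound (X J : finType) (A : {set X}) (P : pred J) (B : J -> {set X}) :
  (forall x, x \in A -> exists2 j, P j & x \in B j) ->
  #|A| <= \sum_(j | P j) #|B j|.
Proof.
move=> H.
rewrite -sum1_card.
have -> : \sum_(j | P j) #|B j| = \sum_(j | P j) \sum_(x in A) (x \in B j) + 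
  \sum_(j | P j) \sum_(x | x \notin A) (x \in B j).
  rewrite -big_split /=; apply: eq_bigr => j _.
  rewrite -sum1_card (bigID (fun x => x \in A)) /=.
  congr (_ + _).
    rewrite [in RHS]big_mkcond [in LHS]big_mkcond /=; apply: eq_bigr => x _.
    by case: (x \in A); case: (x \in B j).
  rewrite [in RHS]big_mkcond [in LHS]big_mkcond /=; apply: eq_bigr => x _.
  by case: (x \in A); case: (x \in B j).
apply: leq_trans (leq_addr _ _).
rewrite exchange_big /=; apply: leq_sum => x xA.
have [j Pj xB] := H x xA.
by rewrite (bigD1 j) //= xB.
Qed.

Lemma cnt_contain n (L : {set 'I_n}) d : d <= n ->
  #|[set I : {set 'I_n} | (#|I| == d) && (L \subset I)]| = 'C(n - #|L|, n - d).
Proof.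
move=> hd.
have -> : [set I : {set 'I_n} | (#|I| == d) && (L \subset I)] =
   (@finset.setC _) @^-1: [set J : {set 'I_n} | (J \subset ~:L) && (#|J| == n - d)].
  apply/setP => I; rewrite !inE finset.setCS.
  have hI : #|I| <= n by rewrite -[n in _ <= n]card_ord max_card.
  have := cardsC I; rewrite card_ord => hc.
  case: (L \subset I); rewrite ?andbF ?andbT //.
  apply/eqP/eqP; lia.
rewrite card_preimset; last exact: finset.setC_inj.
rewrite cards_draws.
have := cardsC L; rewrite card_ord => hc.
congr 'C(_, _); lia.
Qed.

Lemma cnt_disj n (Q : {set 'I_n}) d :
  #|[set I : {set 'I_n} | (#|I| == d) && (Q :&: I == finset.set0)]| = 'C(n - #|Q|, d).
Proof.
have -> : [set I : {set 'I_n} | (#|I| == d) && (Q :&: I == finset.set0)] =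
   [set I : {set 'I_n} | (I \subset ~:Q) && (#|I| == d)].
  apply/setP => I; rewrite !inE finset.setIC finset.setI_eq0 finset.disjoints_subset andbC //.
rewrite cards_draws.
have := cardsC Q; rewrite card_ord => hc.
congr 'C(_, _); lia.
Qed.

Lemma cntA n (L : {set 'I_n}) d : d <= n ->
  #|[set I : {set 'I_n} | (#|I| == d) && (L \subset I)]| * n ^ #|L| <= 'C(n,d) * d ^ #|L|.
Proof.
move=> hd; rewrite cnt_contain //.
have hL : #|L| <= n by rewrite -[n in _ <= n]card_ord max_card.
have := binG (n - d) hL.
by rewrite bin_sub // subKn.
Qed.

Lemma cntC n (Q : {set 'I_n}) d T : d <= n -> 0 < n -> n * T <= #|Q| * d ->
  #|[set I : {set 'I_n} | (#|I| == d) && (Q :&: I == finset.set0)]| * T <= 'C(n,d).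
Proof.
move=> hd hn hT; rewrite cnt_disj.
have hQ : #|Q| <= n by rewrite -[n in _ <= n]card_ord max_card.
have h1 := binG d hQ.
have h2 := bern #|Q| hd.
set X := 'C(n - #|Q|, d) in h1 *; set Y := 'C(n, d) in h1 *.
set P := n ^ #|Q| in h1 h2; set R := (n - d) ^ #|Q| in h1 h2.
rewrite expnS -/P in h2.
have hP : 0 < P by rewrite expn_gt0 hn.
have hnP : 0 < n * P by rewrite muln_gt0 hn hP.
rewrite -(leq_pmul2l hnP).
have h3 : X * P * (n * T) <= Y * R * (n * T) by apply: leq_mul.
have h4 : Y * (R * (n * T)) <= Y * (R * (n + #|Q| * d)) by
  apply: leq_mul => //; apply: leq_mul => //; lia.
have h5 : Y * (R * (n + #|Q| * d)) <= Y * (n * P) by apply: leq_mul.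
lia.
Qed.

Lemma cntB n (Q : {set 'I_n}) d T : d <= n -> 0 < n -> #|Q| * d * T <= n ->
  #|[set I : {set 'I_n} | (#|I| == d) && (Q :&: I != finset.set0)]| * T <= 'C(n,d).
Proof.
move=> hd hn hT.
have hU : #|[set I : {set 'I_n} | (#|I| == d) && (Q :&: I != finset.set0)]| <=
   \sum_(x in Q) #|[set I : {set 'I_n} | (#|I| == d) && ([set x] \subset I)]|.
  apply: union_bound => I; rewrite inE => /andP[hI /set0Pn [x]].
  rewrite inE => /andP[xQ xI]; exists x => //.
  by rewrite inE hI finset.sub1set.
have hx : forall x : 'I_n, #|[set I : {set 'I_n} | (#|I| == d) && ([set x] \subset I)]| * n <= 'C(n, d) * d.
  by move=> x; have := cntA [set x] hd; rewrite cards1 !expn1.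
have hS : (\sum_(x in Q) #|[set I : {set 'I_n} | (#|I| == d) && ([set x] \subset I)]|) * n <= #|Q| * ('C(n,d) * d).
  rewrite big_distrl /= -sum1_card big_distrl /=.
  by apply: leq_sum => x _; rewrite mul1n.
rewrite -(leq_pmul2r hn).
set Z := #|_| in hU *.
set S := \sum_(x in Q) _ in hU hS.
have h1 : Z * n * T <= S * n * T by apply: leq_mul => //; apply: leq_mul.
have h2 : #|Q| * ('C(n,d) * d) * T <= 'C(n,d) * n.
  have : 'C(n,d) * (#|Q| * d * T) <= 'C(n,d) * n by apply: leq_mul.
  lia.
have h3 : S * n * T <= #|Q| * ('C(n,d) * d) * T by apply: leq_mul.
lia.
Qed.

Definition smallt n d T (Q : {set 'I_n}) := #|Q| * d * T <= n.
Definition larget n d T (Q : {set 'I_n}) := n * T <= #|Q| * d.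
Definition useful n d T (Q : {set 'I_n}) := ~~ smallt d T Q && ~~ larget d T Q.

Lemma cardV m (U : {set 'I_m}) (typ : 'I_m -> bool) :
  #|[set v : {ffun 'I_m -> bool} | [forall j, (j \notin U) ==> (v j == typ j)]]| <= 2 ^ #|U|.
Proof.
set V := [set v : {ffun 'I_m -> bool} | _].
pose f (v : {ffun 'I_m -> bool}) := [set j in U | v j].
rewrite -(card_in_imset (f := f)); last first.
  move=> v1 v2; rewrite !inE => /forallP h1 /forallP h2 /setP he.
  apply/ffunP => j; case: (boolP (j \in U)) => jU.
    by have := he j; rewrite !inE jU.
  by have := h1 j; have := h2 j; rewrite jU /= => /eqP -> /eqP ->.
rewrite -card_powerset; apply: subset_leq_card; apply/fintype.subsetP => _ /imsetP [v _ ->].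
by rewrite inE; apply/fintype.subsetP => j; rewrite inE => /andP[].
Qed.

Lemma scale n m l d T (tests : 'I_m -> {set 'I_n}) (D : {ffun 'I_m -> bool} -> {set 'I_n}) :
  d <= n -> 0 < n -> 0 < T ->
  #|[set I : {set 'I_n} | (#|I| == d) && ((D (answers tests I) \subset I) && eqn #|D (answers tests I)| l)]| * T * n ^ l
  <= m * 'C(n,d) * n ^ l + T * 2 ^ #|[set j | useful d T (tests j)]| * 'C(n,d) * d ^ l.
Proof.
move=> hd hn hT.
set U := [set j | useful d T (tests j)].
set A := [set I : {set 'I_n} | _].
pose typ j := ~~ smallt d T (tests j).
pose Bad := [set I : {set 'I_n} | [exists j, (j \notin U) && (answers tests I j != typ j)]].
have hsplit := cardsID Bad A.
have hbad : #|A :&: Bad| * T <= m * 'C(n, d).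
  have hU : #|A :&: Bad| <= \sum_(j | j \notin U)
      #|[set I : {set 'I_n} | (#|I| == d) && (answers tests I j != typ j)]|.
    apply: union_bound => I; rewrite !inE => /andP[/andP [hI _] /existsP [j /andP [jU hj]]].
    by exists j => //; rewrite inE hI.
  apply: leq_trans (leq_mul hU (leqnn T)) _.
  rewrite big_distrl /=.
  apply: (@leq_trans (\sum_(j < m) 'C(n, d))); last by rewrite sum_nat_const card_ord.
  rewrite [X in _ <= X](bigID (fun j => j \notin U)) /=.
  apply: leq_trans (leq_addr _ _); apply: leq_sum => j jU.
  rewrite /typ; move: jU; rewrite inE /useful negb_and !negbK => /orP [hs | hl].
    rewrite hs /=.
    apply: leq_trans (cntB hd hn hs); apply: leq_mul => //.
    apply: subset_leq_card; apply/fintype.subsetP => I; rewrite !inE ffunE /test_answer.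
    by case: (#|I| == d); case: (tests j :&: I == finset.set0).
  case: (boolP (smallt d T (tests j))) => hs.
    apply: leq_trans (cntB hd hn hs); apply: leq_mul => //.
    apply: subset_leq_card; apply/fintype.subsetP => I; rewrite !inE ffunE /test_answer.
    by case: (#|I| == d); case: (tests j :&: I == finset.set0).
  apply: leq_trans (cntC hd hn hl); apply: leq_mul => //.
  apply: subset_leq_card; apply/fintype.subsetP => I; rewrite !inE ffunE /test_answer.
  by case: (#|I| == d); case: (tests j :&: I == finset.set0).
set V := [set v : {ffun 'I_m -> bool} | [forall j, (j \notin U) ==> (v j == typ j)]].
have hgood : #|A :\: Bad| * n ^ l <= 2 ^ #|U| * 'C(n, d) * d ^ l.
  have hU : #|A :\: Bad| <= \sum_(v in V)
      #|[set I : {set 'I_n} | (#|I| == d) && ((D v \subset I) && eqn #|D v| l)]|.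
    apply: union_bound => I; rewrite !inE => /andP[hB /andP [hI hs]].
    exists (answers tests I); last by rewrite inE hI.
    rewrite inE; apply/forallP => j; apply/implyP => jU.
    apply/negPn; apply: contra hB => hj; apply/existsP; exists j; by rewrite jU.
  apply: leq_trans (leq_mul hU (leqnn _)) _.
  rewrite big_distrl /=.
  apply: (@leq_trans (\sum_(v in V) ('C(n, d) * d ^ l))); last first.
    rewrite sum_nat_const -mulnA; apply: leq_mul => //; exact: cardV.
  apply: leq_sum => v _.
  case: (boolP (eqn #|D v| l)) => hv.
    have := cntA (D v) hd; rewrite (eqP hv).
    have -> // : [set I : {set 'I_n} | (#|I| == d) && ((D v \subset I) && true)] =
              [set I : {set 'I_n} | (#|I| == d) && (D v \subset I)].
    by apply/setP => I; rewrite !inE andbT.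
  have -> : [set I : {set 'I_n} | (#|I| == d) && ((D v \subset I) && false)] = finset.set0.
    by apply/setP => I; rewrite !inE !andbF.
  by rewrite cards0.
set a := #|A :&: Bad| in hsplit hbad; set b := #|A :\: Bad| in hsplit hgood.
rewrite -hsplit.
set P := n ^ l in hgood *.
set C := 'C(n, d) in hbad hgood *.
set W := 2 ^ #|U| * C * d ^ l in hgood *.
have h1 : a * T * P <= m * C * P by apply: leq_mul.
have h2 : T * (b * P) <= T * W by apply: leq_mul.
rewrite /W in h2. lia.
Qed.



Lemma card_sum (X : finType) (P Q : pred X) :
  #|[set x | P x && Q x]| = (\sum_(x | P x) (Q x : nat))%N.
Proof.
rewrite -sum1_card big_mkcond [RHS]big_mkcond; apply: eq_bigr => x _.
by rewrite inE; case: (P x); case: (Q x).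
Qed.

Lemma card_sum1 (X : finType) (Q : pred X) :
  #|[set x | Q x]| = (\sum_x (Q x : nat))%N.
Proof.
rewrite -sum1_card big_mkcond; apply: eq_bigr => x _.
by rewrite inE; case: (Q x).
Qed.

Lemma sum_le1 (K : nat) (P : pred 'I_K) :
  (forall i k, P i -> P k -> i = k) -> (\sum_(i < K) (P i : nat) <= 1)%N.
Proof.
move=> H; case: (pickP P) => [i0 Pi0 | none].
  rewrite (bigD1 i0) //= Pi0 big1 // => k /negbTE hk.
  by case: (boolP (P k)) => // Pk; rewrite (H _ _ Pi0 Pk) eqxx in hk.
by rewrite big1 // => i _; rewrite none.
Qed.

Local Open Scope ring_scope.

Lemma disj_useful n T (Q : {set 'I_n}) K (ds : 'I_K -> nat) :
  (forall i k : 'I_K, (i < k)%N -> (ds i * (T * T) <= ds k)%N) ->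
  forall i k : 'I_K, useful (ds i) T Q -> useful (ds k) T Q -> i = k.
Proof.
move=> Hd.
have key : forall i k : 'I_K, (i < k)%N -> useful (ds i) T Q -> useful (ds k) T Q -> False.
  move=> i k ik; rewrite /useful /smallt /larget -!ltnNge.
  move=> /andP [h1 _] /andP [_ h2].
  have h3 := Hd i k ik.
  have h4 : (#|Q| * (ds i * (T * T)) <= #|Q| * ds k)%N by apply: leq_mul.
  have h5 : (n * T < #|Q| * ds i * T * T)%N.
    have hT : (0 < T)%N by case: (posnP T) h1 => [->|//]; rewrite muln0.
    by rewrite ltn_pmul2r.
  nia.
move=> i k hi hk; case: (ltngtP i k) => [ik|ki|/val_inj //].
  by case: (key _ _ ik hi hk).
by case: (key _ _ ki hk hi).
Qed.

Lemma core n l m K T (Omega : finType) (p : Omega -> R)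
  (tests : Omega -> 'I_m -> {set 'I_n})
  (dec : Omega -> {ffun 'I_m -> bool} -> {set 'I_n}) (ds : 'I_K -> nat) Dm u :
  detects_whp l p tests dec ->
  (0 < K)%N -> (1 <= l)%N -> (0 < T)%N -> (4 * m <= T)%N ->
  (forall i, l <= ds i <= Dm)%N ->
  (forall i k : 'I_K, (i < k)%N -> (ds i * (T * T) <= ds k)%N) ->
  (4 * 2 ^ u * Dm ^ l < n ^ l)%N ->
  (K * u.+1 <= 2 * m)%N.
Proof.
move=> [[p0 p1] Hw] hK hl hT hm hds hsep hu.
have hDn : (Dm < n)%N.
  rewrite ltnNge; apply/negP => hn.
  have : (n ^ l <= Dm ^ l)%N by rewrite leq_exp2r.
  have : (Dm ^ l <= 4 * 2 ^ u * Dm ^ l)%N.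
    by rewrite -[X in (X <= _)%N]mul1n leq_mul2r muln_gt0 expn_gt0 orbT.
  lia.
have hn : (0 < n)%N by lia.
have hdn : forall i, (ds i <= n)%N by move=> i; have := hds i; lia.
pose succ w I := (dec w (answers (tests w) I) \subset I) && eqn #|dec w (answers (tests w) I)| l.
pose N w i := #|[set I : {set 'I_n} | (#|I| == ds i) && succ w I]|.
pose C i := 'C(n, ds i).
have hC : forall i, (0 < C i)%N by move=> i; rewrite bin_gt0.
have hNC : forall w i, (N w i <= C i)%N.
  move=> w i; rewrite /C -[n in 'C(n, _)]card_ord -card_draws.
  by apply: subset_leq_card; apply/fintype.subsetP => I; rewrite !inE => /andP[].
pose F w i : R := (N w i)%:R / (C i)%:R.
(* Yao *)
have hi : forall i, 3/4 <= \sum_w p w * F w i.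
  move=> i.
  have hCi : 0 < (C i)%:R :> R by rewrite ltr0n hC.
  have hN : forall w, (N w i)%:R = \sum_(I : {set 'I_n} | #|I| == ds i) ((succ w I : nat)%:R : R).
    by move=> w; rewrite /N card_sum natr_sum.
  have -> : \sum_w p w * F w i =
     (\sum_(I : {set 'I_n} | #|I| == ds i) \sum_w p w * ((succ w I : nat)%:R)) / (C i)%:R.
    rewrite exchange_big /= mulr_suml; apply: eq_bigr => w _.
    by rewrite /F hN mulrA big_distrr.
  rewrite ler_pdivlMr //.
  have hc : (C i)%:R = \sum_(I : {set 'I_n} | #|I| == ds i) (1 : R).
    rewrite /C -[n in 'C(n, _)]card_ord -card_draws -sum1_card natr_sum.
    by apply: eq_big => [I|I _]; rewrite ?inE.
  rewrite hc mulr_sumr; apply: ler_sum => I hI.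
  rewrite mulr1.
  have -> : \sum_w p w * ((succ w I : nat)%:R) = \sum_(w | succ w I) p w.
    rewrite [RHS]big_mkcond; apply: eq_bigr => w _.
    by case: (succ w I); rewrite ?mulr1 ?mulr0.
  case/andP: (hds i) => h1 _.
  have := Hw I; rewrite (eqP hI) => /(_ h1); exact.
have hsumF : K%:R * (3/4) <= \sum_w p w * \sum_(i < K) F w i.
  under eq_bigr do rewrite big_distrr /=.
  rewrite exchange_big /=.
  apply: (@le_trans _ _ (\sum_(i < K) (3/4 : R))).
    by rewrite sumr_const card_ord mulr_natl.
  by apply: ler_sum => i _; apply: hi.
have [w Hw3] : exists w, (K%:R * (3/4) <= \sum_(i < K) F w i).
  case: (boolP [exists w, K%:R * (3/4) <= \sum_(i < K) F w i]).
    by move=> /existsP [w hw]; exists w.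
  rewrite negb_exists => /forallP hall.
  have [w0 hw0] : exists w0, 0 < p w0.
    case: (boolP [exists w, 0 < p w]); first by move=> /existsP [w hw]; exists w.
    rewrite negb_exists => /forallP hz.
    have : \sum_w p w = 0.
      by apply: big1 => w _; apply/eqP; rewrite eq_le p0 andbT leNgt hz.
    by rewrite p1 => /eqP; rewrite oner_eq0.
  have hlt : \sum_w p w * \sum_(i < K) F w i < \sum_w p w * (K%:R * (3/4)).
    rewrite [X in X < _](bigD1 w0) //= [X in _ < X](bigD1 w0) //=.
    apply: ltr_leD.
      by rewrite ltr_pM2l // ltNge hall.
    apply: ler_sum => w _; apply: ler_wpM2l => //.
    by apply: ltW; rewrite ltNge hall.
  rewrite -mulr_suml p1 mul1r in hlt.
  by have := lt_le_trans hlt hsumF; rewrite ltxx.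
pose G := [set i : 'I_K | (C i <= 2 * N w i)%N].
have hG : (K <= 2 * #|G|)%N.
  have hF : forall i, F w i <= (1 + (i \in G)%:R) / 2.
    move=> i; rewrite /F.
    have hCi : 0 < (C i)%:R :> R by rewrite ltr0n hC.
    rewrite ler_pdivrMr //.
    case: (boolP (i \in G)) => iG.
      have -> : (1 + 1%:R) / 2 = 1 :> R by field.
      by rewrite mul1r ler_nat hNC.
    rewrite inE -ltnNge in iG.
    have : ((N w i)%:R * 2 < (C i)%:R :> R) by rewrite -natrM ltr_nat mulnC.
    move=> h; rewrite addr0 mul1r; lra.
  have hS : \sum_(i < K) (1 + (i \in G)%:R) / 2 = (K%:R + #|G|%:R) / 2 :> R.
    rewrite -mulr_suml big_split /= sumr_const card_ord.
    have -> : #|G| = (\sum_(i < K) ((i \in G) : nat))%N.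
      by rewrite -sum1_card big_mkcond /=; apply: eq_bigr => i _; case: (i \in G).
    by rewrite natr_sum.
  have h : K%:R * (3/4) <= (K%:R + #|G|%:R) / 2 :> R.
    apply: le_trans Hw3 _; rewrite -hS; apply: ler_sum => i _; exact: hF.
  rewrite -(ler_nat R) natrM; lra.
pose uu i := #|[set j | useful (ds i) T (tests w j)]|.
have hgood : forall i, i \in G -> (u < uu i)%N.
  move=> i; rewrite inE => hiG; rewrite ltnNge; apply/negP => hle.
  have h := @scale n m l (ds i) T (tests w) (dec w) (hdn i) hn hT.
  rewrite -/(uu i) in h.
  have hE : (2 ^ uu i <= 2 ^ u)%N by apply: leq_pexp2l.
  have hY : (ds i ^ l <= Dm ^ l)%N by rewrite leq_exp2r //; have := hds i; lia.
  have hEY : (2 ^ uu i * ds i ^ l <= 2 ^ u * Dm ^ l)%N by apply: leq_mul.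
  set X := #|_| in h.
  have hX : X = N w i by [].
  rewrite hX in h.
  move: h hiG hEY hu; rewrite -/(C i).
  set E := (2 ^ uu i)%N; set Y := (ds i ^ l)%N; set P := (n ^ l)%N.
  set E' := (2 ^ u)%N; set Y' := (Dm ^ l)%N; set Ci := C i; set Xn := N w i.
  move=> h hiG hEY hu.
  have hTC : (0 < T * Ci)%N by rewrite muln_gt0 hT hC.
  have a1 : ((4 * m) * (Ci * P) <= T * (Ci * P))%N by apply: leq_mul.
  have a2 : ((4 * (E * Y)) * (T * Ci) < P * (T * Ci))%N.
    by rewrite ltn_pmul2r //; lia.
  have a3 : (Ci * (T * P) <= (2 * Xn) * (T * P))%N by apply: leq_mul.
  lia.
have hsum : (\sum_(i < K) uu i <= m)%N.
  rewrite /uu; under eq_bigr do rewrite card_sum1.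
  rewrite exchange_big /=.
  apply: (@leq_trans (\sum_(j < m) 1)); last by rewrite sum1_card card_ord.
  apply: leq_sum => j _; apply: sum_le1 => i k; exact: disj_useful.
have : (#|G| * u.+1 <= m)%N.
  apply: leq_trans hsum.
  rewrite -sum1_card big_distrl /=.
  apply: (@leq_trans (\sum_(i in G) uu i)).
    by apply: leq_sum => i iG; rewrite mul1n; apply: hgood.
  by rewrite [X in (_ <= X)%N](bigID (fun i => i \in G)) /= leq_addr.
nia.
Qed.



Lemma ln2_gt0 : 0 < ln (2:R).
Proof. by apply: ln_gt0; rewrite ltr1n. Qed.

Lemma log2_le (x y : R) : 0 < x -> x <= y -> log2 x <= log2 y.
Proof.
move=> hx hxy; rewrite /log2 !RdivE ler_pM2r ?invr_gt0 ?ln2_gt0 //.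
by rewrite ler_ln // posrE (lt_le_trans hx hxy).
Qed.

Lemma log2_lt_inv (x y : R) : 0 < x -> 0 < y -> log2 x < log2 y -> x < y.
Proof.
move=> hx hy; rewrite /log2 !RdivE ltr_pM2r ?invr_gt0 ?ln2_gt0 //.
by rewrite ltr_ln.
Qed.

Lemma log2M (x y : R) : 0 < x -> 0 < y -> log2 (x * y) = log2 x + log2 y.
Proof. by move=> hx hy; rewrite /log2 !RdivE lnM ?posrE // mulrDl. Qed.

Lemma log2X (x : R) k : 0 < x -> log2 (x ^+ k) = k%:R * log2 x.
Proof. by move=> hx; rewrite /log2 !RdivE lnXn // mulrA mulr_natl. Qed.

Lemma log2_2 : log2 (2:R) = 1.
Proof. by rewrite /log2 !RdivE divff // gt_eqF // ln2_gt0. Qed.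

Lemma log2_1 : log2 (1:R) = 0.
Proof. by rewrite /log2 !RdivE ln1 mul0r. Qed.

Lemma log2_powR (x c : R) : log2 (x `^ c) = c * log2 x.
Proof. by rewrite /log2 !RdivE ln_powR mulrA. Qed.

Lemma log2_exp2 k : log2 ((2 ^ k)%N%:R : R) = k%:R.
Proof. by rewrite natrX log2X // log2_2 mulr1. Qed.

Lemma log2_ge0 (x : R) : 1 <= x -> 0 <= log2 x.
Proof. by move=> hx; rewrite /log2 RdivE; apply: divr_ge0; [exact: ln_ge0 | exact: (ltW ln2_gt0)]. Qed.



Lemma natf1 m : (2 ^ 2 <= 4 * m + 4)%N. Proof. lia. Qed.
Lemma natf2 (i k : nat) : (i < k.+1)%N -> (2 * i <= 2 * k)%N. Proof. lia. Qed.
Lemma natf3 (i j : nat) : (i < j)%N -> (2 * i + 2 <= 2 * j)%N. Proof. lia. Qed.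
Lemma natf4 m : (4 * m <= 4 * m + 4)%N. Proof. lia. Qed.

Lemma fin_ineq (U V A B C D : R) : V <= A -> B <= C -> C + A = D -> U = V - 3 ->
  U + 2%:R + B < D.
Proof. move=> h1 h2 h3 h4; rewrite h4 -h3; lra. Qed.

Lemma final_contra (a Lr l la mu lT x A B m : R) :
  0 < a -> 0 <= Lr -> 0 <= l -> 0 <= la -> 1 <= mu -> 0 <= lT -> 0 <= x ->
  x < A -> a * Lr <= x * (2 * lT) -> lT <= 3 + la + 2 * mu ->
  a * l * Lr < B + 3 -> 6 <= a * l * Lr -> A * B <= 2 * m ->
  m * (la + mu) < a ^+ 2 / 40 * (l * Lr ^+ 2) -> False.
Proof.
move=> ha hL hl hla hmu hlT hx hxA hxa hlT2 hB hB6 hcore hm.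
have hA0 : 0 <= A by lra.
have f2 : a * Lr <= A * (10 * (la + mu)).
  have g1 : x * (2 * lT) <= A * (2 * lT) by apply: ler_wpM2r; lra.
  have g2 : A * (2 * lT) <= A * (10 * (la + mu)) by apply: ler_wpM2l => //; lra.
  lra.
have f3 : a * l * Lr / 2 <= B by lra.
have f4 : (a * Lr) * (a * l * Lr / 2) <= (A * (10 * (la + mu))) * B.
  by apply: ler_pM => //; [apply: mulr_ge0; lra | lra].
have f5 : (A * (10 * (la + mu))) * B = (10 * (la + mu)) * (A * B) by ring.
have f6 : (10 * (la + mu)) * (A * B) <= (10 * (la + mu)) * (2 * m).
  by apply: ler_wpM2l => //; lra.
have f7 : (a * Lr) * (a * l * Lr / 2) = 20 * (a ^+ 2 / 40 * (l * Lr ^+ 2)).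
  by rewrite !expr2; field.
have f8 : (10 * (la + mu)) * (2 * m) = 20 * (m * (la + mu)) by ring.
lra.
Qed.

Theorem theorem14 :
  forall c : R, c < 1 ->
  exists C : R, 0 < C /\
  exists N : nat,
  forall (n l m : nat) (Omega : finType) (p : Omega -> R)
    (tests : Omega -> 'I_m -> {set 'I_n})
    (dec : Omega -> {ffun 'I_m -> bool} -> {set 'I_n}),
    (N <= n)%N -> (1 <= l)%N -> l%:R <= (n%:R) `^ c ->
    detects_whp l p tests dec ->
    C * (l%:R * (log2 n%:R) ^+ 2) / (log2 l%:R + log2 (log2 n%:R)) <= m%:R.
Proof.
move=> c hc.
pose c1 := Num.max c 0.
have hcc1 : c <= c1 by rewrite le_max lexx.
have hc10 : 0 <= c1 by rewrite le_max lexx orbT.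
have hc11 : c1 < 1 by rewrite gt_max hc ltr01.
pose a : R := (1 - c1) / 2.
have ha0 : 0 < a by rewrite /a; lra.
have ha1 : a <= 1/2 by rewrite /a; lra.
exists (a ^+ 2 / 40); split; first by rewrite divr_gt0 // exprn_gt0.
pose t := Num.truncn (6 / a).
exists (2 ^ (t + 3))%N.
move=> n l m Omega p tests dec hN hl hlc hdet.
have hn4 : (4 <= n)%N.
  apply: leq_trans hN; rewrite expnD (_ : 2 ^ 3 = 8)%N //.
  by rewrite -[4%N]mul1n leq_mul // expn_gt0.
have hn0 : 0 < n%:R :> R by rewrite ltr0n; lia.
have hl0 : 0 < l%:R :> R by rewrite ltr0n.
set Lr := log2 n%:R.
have hLt : (t + 3)%:R <= Lr.
  rewrite -log2_exp2 /Lr; apply: log2_le; first by rewrite ltr0n expn_gt0.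
  by rewrite ler_nat.
have ht : 6 / a < t%:R + 1 by rewrite natr1; exact: (truncnS_gt (6 / a)).
have hLa : 6 <= a * Lr.
  have : 6 / a < Lr by rewrite natrD in hLt; lra.
  by rewrite ltr_pdivrMr // mulrC => /ltW.
have hL2 : 2 <= Lr by rewrite natrD in hLt; have : 0 <= t%:R :> R by []; lra.
set la := log2 l%:R.
have hla0 : 0 <= la by apply: log2_ge0; rewrite ler1n.
have hla : la <= c1 * Lr.
  apply: (@le_trans _ _ (c * Lr)); last by apply: ler_wpM2r => //; lra.
  by rewrite -log2_powR; apply: log2_le.
set mu := log2 Lr.
have hmu : 1 <= mu by rewrite -log2_2; apply: log2_le.
have hS : 1 <= la + mu by lra.
rewrite ler_pdivrMr; last by lra.
case: (lerP (a ^+ 2 / 40 * (l%:R * Lr ^+ 2)) (m%:R * (la + mu))) => // hm.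
exfalso.
have hX1 : 1 <= l%:R * Lr ^+ 2.
  apply: (le_trans (_ : 1 <= 1 * 1)); first by rewrite mulr1.
  apply: ler_pM => //; first by rewrite ler1n.
  rewrite expr2; apply: (le_trans (_ : 1 <= 1 * 1)); first by rewrite mulr1.
  by apply: ler_pM => //; lra.
have hmX : m%:R < l%:R * Lr ^+ 2.
  have h0 : 0 <= m%:R :> R by [].
  have h1 : m%:R <= m%:R * (la + mu) by rewrite ler_peMr.
  have ha2 : a ^+ 2 / 40 <= 1.
    have : a ^+ 2 <= 1.
      rewrite expr2; apply: (le_trans (_ : a * a <= 1 * 1)); last by rewrite mulr1.
      by apply: ler_pM; lra.
    lra.
  have h2 : a ^+ 2 / 40 * (l%:R * Lr ^+ 2) <= l%:R * Lr ^+ 2.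
    by apply: ler_piMl => //; lra.
  lra.
have [T hTe] : {T : nat | T = (4 * m + 4)%N} by exists (4 * m + 4)%N.
have hT0 : (0 < T)%N by rewrite hTe addn_gt0 orbT.
have hTR : T%:R = 4 * m%:R + 4 :> R by rewrite hTe natrD natrM.
set lT := log2 T%:R.
have hlT : lT <= 3 + la + 2 * mu.
  have hT8 : T%:R <= (2 ^ 3)%N%:R * l%:R * Lr ^+ 2 :> R.
    rewrite hTR (_ : (2 ^ 3)%N = 8%N) //.
    have : 0 <= m%:R :> R by [].
    lra.
  have hTp : 0 < T%:R :> R by rewrite ltr0n.
  have := log2_le hTp hT8.
  have hL0 : 0 < Lr by lra.
  have p8 : 0 < (2^3)%N%:R :> R by rewrite ltr0n expn_gt0.
  have pL2 : 0 < Lr ^+ 2 by rewrite exprn_gt0.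
  have p8l : 0 < (2^3)%N%:R * l%:R :> R by rewrite mulr_gt0.
  rewrite (log2M p8l pL2) (log2M p8 hl0) log2_exp2 (log2X 2 hL0).
  by rewrite -/lT -/la -/mu => h; lra.
have hlT2 : 2 <= lT.
  rewrite -(log2_exp2 2) /lT; apply: log2_le; first by rewrite ltr0n.
  by rewrite ler_nat hTe natf1.
have [x hxd] : {x : R | x = ((1 - a) * Lr - la) / (2 * lT)} by eexists.
have hlT0 : 2 * lT != 0 by apply: lt0r_neq0; lra.
have hxe : x * (2 * lT) = (1 - a) * Lr - la by rewrite hxd divfK.
have hcL : c1 * Lr = Lr - 2 * (a * Lr) by rewrite /a; field.
have haL : 0 <= a * Lr by lra.
have hxa : a * Lr <= x * (2 * lT) by rewrite hxe; lra.
have hx0 : 0 <= x.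
  rewrite hxd; apply: divr_ge0; lra.
have [k hkd] : {k : nat | k = Num.truncn x} by eexists.
have hk1 : k%:R <= x by rewrite hkd truncn_le.
have hk2 : x < k%:R + 1 by rewrite hkd natr1; exact: (truncnS_gt x).
pose K := k.+1.
pose ds := fun i : 'I_K => (l * T ^ (2 * i))%N.
have [Dm hDmd] : {Dm : nat | Dm = (l * T ^ (2 * k))%N} by eexists.
have [v hvd] : {v : nat | v = Num.truncn (a * l%:R * Lr)} by eexists.
have hv0 : 0 <= a * l%:R * Lr by apply: mulr_ge0; [apply: mulr_ge0|]; lra.
have hv1 : v%:R <= a * l%:R * Lr by rewrite hvd truncn_le.
have hv2 : a * l%:R * Lr < v%:R + 1 by rewrite hvd natr1; exact: (truncnS_gt _).
have hal : a * Lr <= a * l%:R * Lr.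
  have : 1 <= l%:R :> R by rewrite ler1n.
  have : 0 <= a * Lr by lra.
  nra.
have hv6 : (6 <= v)%N by rewrite hvd truncn_ge_nat //; lra.
have [u hud] : {u : nat | u = (v - 3)%N} by eexists.
have h3v : (3 <= v)%N by apply: leq_trans hv6.
have huR : u%:R = v%:R - 3 :> R by rewrite hud natrB.
have hds : forall i : 'I_K, (l <= ds i <= Dm)%N.
  move=> i; apply/andP; split.
    by rewrite /ds -[X in (X <= _)%N]muln1 leq_mul // expn_gt0 hT0.
  rewrite /ds hDmd leq_mul // leq_pexp2l //.
  by apply: natf2; exact: ltn_ord i.
have hsep : forall i j : 'I_K, (i < j)%N -> (ds i * (T * T) <= ds j)%N.
  move=> i j ij; rewrite /ds -mulnA.
  have -> : (T ^ (2 * i) * (T * T) = T ^ (2 * i + 2))%N by rewrite expnD (expnS T 1) expn1.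
  by rewrite leq_mul // leq_pexp2l //; exact: natf3.
have hu : (4 * 2 ^ u * Dm ^ l < n ^ l)%N.
  rewrite (_ : (4 * 2 ^ u = 2 ^ (u + 2))%N); last by rewrite expnD mulnC.
  rewrite -(ltr_nat R) !natrM !natrX.
  have hTp : 0 < T%:R :> R by rewrite ltr0n.
  have hDm : 0 < Dm%:R :> R by rewrite ltr0n hDmd muln_gt0 hl expn_gt0 hT0.
  have hlogDm : log2 Dm%:R = la + (2 * k)%:R * lT.
    have hTk : 0 < T%:R ^+ (2 * k) :> R by apply: exprn_gt0.
    by rewrite hDmd natrM natrX (log2M hl0 hTk) log2X.
  have p2 : 0 < 2 :> R by lra.
  have p2u : 0 < 2 ^+ (u + 2) :> R by apply: exprn_gt0.
  have pDl : 0 < Dm%:R ^+ l :> R by apply: exprn_gt0.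
  apply: log2_lt_inv; first exact: mulr_gt0 p2u pDl.
    exact: exprn_gt0.
  rewrite (log2M p2u pDl) (log2X _ hDm) (log2X _ hn0).
  rewrite hlogDm (log2X _ p2) log2_2 -/Lr.
  have e1 : (2 * k)%:R * lT <= (1 - a) * Lr - la.
    have ek : (2 * k)%:R * lT = k%:R * (2 * lT) :> R by rewrite natrM; ring.
    have : k%:R * (2 * lT) <= x * (2 * lT) by apply: ler_wpM2r => //; lra.
    rewrite ek -hxe; exact.
  have e2 : l%:R * (la + (2 * k)%:R * lT) <= l%:R * ((1 - a) * Lr).
    by apply: ler_wpM2l; lra.
  have e3 : l%:R * ((1 - a) * Lr) + a * l%:R * Lr = l%:R * Lr by ring.
  rewrite mulr1 natrD; exact: fin_ineq hv1 e2 e3 huR.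
have := core hdet (ltn0Sn k) hl hT0 (_ : (4 * m <= T)%N) hds hsep hu.
move=> /(_ ltac:(by rewrite hTe natf4)).
rewrite -(ler_nat R) natrM natrM.
rewrite -/K (_ : K%:R = k%:R + 1 :> R); last by rewrite /K natr1.
rewrite (_ : u.+1%:R = (v%:R - 2) :> R); last by rewrite -natr1 huR; ring.
move=> hcore.
apply: (@final_contra a Lr l%:R la mu lT x (k%:R + 1) (v%:R - 2) m%:R ha0 _ _ hla0 hmu _ hx0 hk2 hxa hlT _ _ hcore hm).
- lra.
- by [].
- lra.
- lra.
- lra.
Qed.
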